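(* For $(\varphi,\xi,\theta)\in[0,\pi/2]\times[0,\pi]\times[0,\pi/2]$ let $C_\theta=\cos\theta\,(|\uparrow\rangle\langle\uparrow|+|\downarrow\rangle\langle\downarrow|)+\sin\theta\,(|\uparrow\rangle\langle\downarrow|-|\downarrow\rangle\langle\uparrow|)$ and $\gamma_{\varphi,\xi}=\cos\varphi\,|\uparrow\rangle+\sin\varphi\,e^{i\xi}|\downarrow\rangle$. Then for every coin setup $(C,\gamma)$, with $C\in U(2)$ arbitrary and $\gamma\in\mathbb{C}^2$ an arbitrary unit vector, there exists $(\varphi,\xi,\theta)\in[0,\pi/2]\times[0,\pi]\times[0,\pi/2]$ such that $(C,\gamma)\sim_d(C_\theta,\gamma_{\varphi,\xi})$. That is, the map $(\varphi,\xi,\theta)\mapsto(C_\theta,\gamma_{\varphi,\xi})$ is surjective onto the set of distributional equivalence classes of all coin setups.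
   Context: Let $\mathcal{H}=\ell^2(\mathbb{Z})\otimes\mathbb{C}^2$, with position basis $\{|j\rangle: j\in\mathbb{Z}\}$ of $\ell^2(\mathbb{Z})$ and orthonormal basis $\{|\uparrow\rangle,|\downarrow\rangle\}$ of $\mathbb{C}^2$. A (quantum) coin is any $C\in U(2)$. The conditional translation is $T=\sum_{j\in\mathbb{Z}}|j+1\rangle\langle j|\otimes|\uparrow\rangle\langle\uparrow|+\sum_{j\in\mathbb{Z}}|j-1\rangle\langle j|\otimes|\downarrow\rangle\langle\downarrow|$ and the walk operator is $W(C)=T(\mathbb{1}\otimes C)$. A coin setup is a pair $(C,\gamma)$ with $C\in U(2)$ and $\gamma\in\mathbb{C}^2$ a unit vector (the initial coin state). Its induced distributions are $p_{(C,\gamma)}(j,n)=\langle\psi_n|(|j\rangle\langle j|\otimes\mathbb{1})|\psi_n\rangle$ with $\psi_n=W(C)^n(|0\rangle\otimes\gamma)$, for $j\in\mathbb{Z}$, $n\in\mathbb{N}$. Two coin setups $\mathcal{C}_1,\mathcal{C}_2$ are distributionally equivalent, written $\mathcal{C}_1\sim_d\mathcal{C}_2$, if $p_{\mathcal{C}_1}(j,n)=p_{\mathcal{C}_2}(j,n)$ for all $j\in\mathbb{Z}$, $n\in\mathbb{N}$. *)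

(* Defs.v *)
From HB Require Import structures.
From mathcomp Require Import all_boot all_order all_algebra.
From mathcomp Require Import reals trigo complex.

Set Implicit Arguments.
Unset Strict Implicit.
Unset Printing Implicit Defensive.

Import Order.TTheory GRing.Theory Num.Theory.
Local Open Scope ring_scope.
Local Open Scope complex_scope.

Section QW.
Variable R : realType.
Local Notation C := R[i].

Definition up : 'I_2 := ord0.
Definition down : 'I_2 := ord_max.

(* A vector of H = l^2(Z) (x) C^2, as a function Z -> C^2
   (only finitely supported vectors arise below). *)
Definition state := int -> 'cV[C]_2.

Definition adj (A : 'M[C]_2) : 'M[C]_2 := (map_mx Num.conj A)^T.

Definition unitary2 (A : 'M[C]_2) : Prop := adj A *m A = 1%:M /\ A *m adj A = 1%:M.

Definition unit_vec (g : 'cV[C]_2) : Prop := \sum_(s < 2) `|g s 0| ^+ 2 = 1.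

(* W(C) = T (1 (x) C), where
   T = sum_j |j+1><j| (x) |up><up| + sum_j |j-1><j| (x) |down><down|:
   (W psi)(j)_up = (C psi(j-1))_up,  (W psi)(j)_down = (C psi(j+1))_down. *)
Definition walk (A : 'M[C]_2) (psi : state) : state :=
  fun j => \col_(s < 2)
    (if s == up then (A *m psi (j - 1)) s 0 else (A *m psi (j + 1)) s 0).

Definition init (g : 'cV[C]_2) : state := fun j => if j == 0 then g else 0.

Definition psi (A : 'M[C]_2) (g : 'cV[C]_2) (n : nat) : state :=
  iter n (walk A) (init g).

(* p_(C,gamma)(j,n) = <psi_n| (|j><j| (x) 1) |psi_n> = ||psi_n(j)||^2. *)
Definition prob (A : 'M[C]_2) (g : 'cV[C]_2) (j : int) (n : nat) : C :=
  \sum_(s < 2) `|psi A g n j s 0| ^+ 2.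

Definition dist_equiv (A1 : 'M[C]_2) (g1 : 'cV[C]_2)
                      (A2 : 'M[C]_2) (g2 : 'cV[C]_2) : Prop :=
  forall (j : int) (n : nat), prob A1 g1 j n = prob A2 g2 j n.

Definition Ctheta (th : R) : 'M[C]_2 :=
  \matrix_(r < 2, c < 2)
    (if r == c then (cos th)%:C
     else if (r == up) && (c == down) then (sin th)%:C
     else - (sin th)%:C).

Definition expi (x : R) : C := (cos x) +i* (sin x).

Definition gamma (ph x : R) : 'cV[C]_2 :=
  \col_(s < 2) (if s == up then (cos ph)%:C else (sin ph)%:C * expi x).

End QW.

(* Main.v *)
Require Import Defs.
From HB Require Import structures.
From mathcomp Require Import all_boot all_order all_algebra.
From mathcomp Require Import reals trigo complex ring lra.
Import Order.TTheory GRing.Theory Num.Theory.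
Local Open Scope complex_scope.
Local Open Scope ring_scope.

Section Gauge.
Context {R : realType}.
Local Notation C := R[i].

Lemma sum2 (F : 'I_2 -> C) : \sum_(k < 2) F k = F (up) + F (down).
Proof.
rewrite !big_ord_recl big_ord0 addr0 /up /down; congr (_ + F _); exact: val_inj.
Qed.

Lemma ord2P (s : 'I_2) : s = up \/ s = down.
Proof.
case: s => [[|[|m]] Hm]; [left|right|by []]; exact: val_inj.
Qed.

Lemma psiS (A : 'M[C]_2) g n : psi A g n.+1 = walk A (psi A g n).
Proof. by []. Qed.

Lemma normXz1 (x : C) (j : int) : `|x| = 1 -> `|x ^ j| = 1.
Proof.
move=> hx; case: j => n; first by rewrite normrX hx expr1n.
by rewrite NegzE -exprnN normrV ?normrX ?hx ?expr1n ?invr1 // unitfE -normr_eq0 normrX hx expr1n oner_eq0.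
Qed.

Lemma gauge_psi (A A' : 'M[C]_2) (g g' : 'cV[C]_2) (u v : 'I_2 -> C) (k x y : C) :
  x != 0 -> (forall s, v s != 0) ->
  (forall r s, A' r s = u r * A r s * v s) ->
  (forall s, g' s 0 = k * g s 0 / v s) ->
  u (up) * v (up) = y * x -> u (down) * v (down) = y / x ->
  forall n j s, psi A' g' n j s 0 = y ^+ n * x ^ j * (k / v s) * psi A g n j s 0.
Proof.
move=> hx hv hA hg hup hdn; elim=> [|n IH] j s.
  rewrite /psi /= /init; case: eqP => [->|_]; last by rewrite !mxE mulr0.
  by rewrite hg expr0 expr0z; field; exact: hv.
rewrite !psiS /walk !mxE.
have hv0 := hv (up); have hv1 := hv (down).
have hud : (down == up) = false by [].
have huu : (up == up) = true by [].
case: (ord2P s) => ->; rewrite ?hud ?huu.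
- rewrite !sum2 !hA !IH.
  have -> : x ^ j = x ^ (j - 1) * x by rewrite -[in RHS](expr1z x) -expfzDr // subrK.
  have hu : u (up) = y * x / v (up) by rewrite -hup mulfK.
  rewrite hu exprS; field; by rewrite hv0 hv1.
- rewrite !sum2 !hA !IH.
  have -> : x ^ j = x ^ (j + 1) / x by rewrite expfzDr // expr1z mulfK.
  have hu : u (down) = y / x / v (down) by rewrite -hdn mulfK.
  rewrite hu exprS; field; by rewrite hv0 hv1 hx.
Qed.


Lemma gauge_equiv (A A' : 'M[C]_2) (g g' : 'cV[C]_2) (u v : 'I_2 -> C) (k : C) :
  (forall s, `|v s| = 1) -> (forall s, `|u s| = 1) -> `|k| = 1 ->
  (forall r s, A' r s = u r * A r s * v s) ->
  (forall s, g' s 0 = k * g s 0 / v s) ->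
  dist_equiv A g A' g'.
Proof.
move=> hv hu hk hA hg.
have hv0 s : v s != 0 by rewrite -normr_eq0 hv oner_eq0.
have hu0 s : u s != 0 by rewrite -normr_eq0 hu oner_eq0.
pose al := u up * v up; pose be := u down * v down.
have hal : al != 0 by rewrite mulf_neq0.
have hbe : be != 0 by rewrite mulf_neq0.
pose x := @sqrtc R (al / be).
have hx2 : x ^+ 2 = al / be by rewrite /x sqr_sqrtc.
have hx : x != 0 by apply/negP => /eqP hx0; move: hx2; rewrite hx0 expr0n /= => /esym/eqP; rewrite mulf_eq0 invr_eq0 (negbTE hal) (negbTE hbe).
have hxn : `|x| = 1.
  apply/eqP; rewrite -(@eqrXn2 _ 2) // ?normr_ge0 // -normrX hx2 normrM normrV ?unitfE //.
  by rewrite !normrM !hu !hv !mulr1 invr1 mulr1 expr1n.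
pose y := al / x.
have hy : `|y| = 1 by rewrite /y normrM normrV ?unitfE // hxn invr1 mulr1 normrM hu hv mulr1.
have hup : al = y * x by rewrite /y mulfVK.
have hdn : be = y / x.
  rewrite /y -mulrA -invfM -expr2 hx2; field; by rewrite hal hbe.
move=> j n; rewrite /prob; apply: eq_bigr => s _.
rewrite (@gauge_psi A A' g g' u v k x y hx hv0 hA hg hup hdn).
by rewrite !(@normrM C) (@normrX C) hy expr1n normXz1 // normrV ?unitfE // hk hv invr1 !mul1r.
Qed.

Lemma conj_psi (A : 'M[C]_2) (g : 'cV[C]_2) n j s :
  psi (map_mx Num.conj A) (map_mx Num.conj g) n j s 0 = Num.conj (psi A g n j s 0).
Proof.
elim: n j s => [|n IH] j s.
  rewrite /psi /= /init; case: eqP => _; first by rewrite mxE.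
  by rewrite !mxE rmorph0.
rewrite !psiS /walk !mxE.
have hud : (down == up) = false by [].
have huu : (up == up) = true by [].
by case: (ord2P s) => ->; rewrite ?hud ?huu !sum2 !mxE !IH rmorphD !rmorphM.
Qed.

Lemma conj_equiv (A : 'M[C]_2) (g : 'cV[C]_2) :
  dist_equiv A g (map_mx Num.conj A) (map_mx Num.conj g).
Proof.
by move=> j n; rewrite /prob; apply: eq_bigr => s _; rewrite conj_psi norm_conjC.
Qed.


Definition nr (z : C) : R := complex.Re `|z|.

Lemma normE (z : C) : `|z| = (nr z)%:C.
Proof. by rewrite /nr normc_def. Qed.

Lemma nr_ge0 z : 0 <= nr z.
Proof. by rewrite -ler0c -normE. Qed.

Definition ph (z : C) : C := if z == 0 then 1 else z / `|z|.

Lemma ph_norm z : `|ph z| = 1.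
Proof.
rewrite /ph; case: eqP => [_|/eqP hz]; first by rewrite normr1.
by rewrite normrM normrV ?unitfE ?normr_eq0 // normr_id divff // normr_eq0.
Qed.

Lemma ph_conjl z : (ph z)^* * z = `|z|.
Proof.
rewrite /ph; case: eqP => [->|/eqP hz]; first by rewrite mulr0 normr0.
rewrite rmorphM /= fmorphV /= conj_normC mulrAC -normCKC.
by rewrite expr2 mulfK // normr_eq0.
Qed.

Lemma ph_conjr z : z^* * ph z = `|z|.
Proof. by rewrite -[RHS]conj_normC -ph_conjl rmorphM /= conjCK mulrC. Qed.

Lemma ph_conj_ph z : (ph z)^* * ph z = 1.
Proof. by rewrite -normCKC ph_norm expr1n. Qed.

Lemma ph_ne0 {z} : z != 0 -> (ph z)^* = z^* / `|z|.
Proof. by move=> hz; rewrite /ph (negbTE hz) rmorphM /= fmorphV /= conj_normC. Qed.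


Lemma unitary_facts (A : 'M[C]_2) : unitary2 A ->
  let a := A up up in let b := A up down in let c := A down up in let d := A down down in
  [/\ `|a| ^+ 2 + `|b| ^+ 2 = 1, `|a| ^+ 2 + `|c| ^+ 2 = 1,
      `|b| ^+ 2 + `|d| ^+ 2 = 1 & a^* * b + c^* * d = 0].
Proof.
case=> h1 h2 a b c d.
have e1 := congr1 (fun M : 'M[C]_2 => M up up) h2.
have e2 := congr1 (fun M : 'M[C]_2 => M up up) h1.
have e3 := congr1 (fun M : 'M[C]_2 => M down down) h1.
have e4 := congr1 (fun M : 'M[C]_2 => M up down) h1.
move: e1 e2 e3 e4; rewrite /= !mxE !sum2 /adj !mxE !normCKC.
move=> e1 e2 e3 e4; rewrite /a /b /c /d; split.
- by rewrite [_^* * A up up]mulrC [_^* * A up down]mulrC e1.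
- by rewrite e2.
- by rewrite e3.
- by rewrite e4.
Qed.


Lemma acos_props {r : R} : 0 <= r <= 1 ->
  [/\ 0 <= acos r, acos r <= pi / 2, cos (acos r) = r
    & sin (acos r) = Num.sqrt (1 - r ^+ 2)].
Proof.
case/andP=> r0 r1.
have hr : -1 <= r <= 1 by apply/andP; split=> //; lra.
have hr' : -1 <= - r <= 1 by apply/andP; split; lra.
split; [exact: acos_ge0 | | by apply: acosK; rewrite in_itv /= | exact: sin_acos].
rewrite leNgt; apply/negP => hlt.
have hpi := @pi_gt0 R.
have h1 : acos (- r) < pi / 2.
  rewrite acosN //; lra.
have h0 : 0 <= acos (- r) := acos_ge0 hr'.
have h2 : - (pi / 2) < acos (- r) < pi / 2 by apply/andP; split=> //; lra.
have := cos_gt0_pihalf h2.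
rewrite acosK ?in_itv //=; lra.
Qed.

Lemma RC_sq (x y : R) : (x%:C)^+2 + (y%:C)^+2 = ((x^+2 + y^+2))%:C :> C.
Proof. by rewrite rmorphD !rmorphXn. Qed.

Lemma nr_sq {p q : C} : `|p| ^+ 2 + `|q| ^+ 2 = 1 -> nr p ^+ 2 + nr q ^+ 2 = 1.
Proof. by rewrite !normE RC_sq => h; apply: complexI; rewrite h. Qed.

Lemma ctheta_gauge (A : 'M[C]_2) : unitary2 A ->
  exists th (u v : 'I_2 -> C),
  [/\ 0 <= th <= pi / 2, (forall s, `|v s| = 1), (forall s, `|u s| = 1), v up = 1
    & (forall r s, Ctheta th r s = u r * A r s * v s)].
Proof.
move=> hA; have [E1 E2 E3 E4] := unitary_facts A hA.
move: E1 E2 E3 E4.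
set a := A up up; set b := A up down; set c := A down up; set d := A down down.
move=> E1 E2 E3 E4.
have S1 := nr_sq E1; have S2 := nr_sq E2; have S3 := nr_sq E3.
have ha0 := nr_ge0 a; have hb0 := nr_ge0 b; have hc0 := nr_ge0 c; have hd0 := nr_ge0 d.
have hcb : nr c = nr b.
  by apply/eqP; rewrite -(@eqrXn2 _ 2) //; apply/eqP; lra.
have hda : nr d = nr a.
  by apply/eqP; rewrite -(@eqrXn2 _ 2) //; apply/eqP; lra.
have ha1 : 0 <= nr a <= 1 by apply/andP; split=> //; nra.
have [th0 th1 hcos hsin] := acos_props ha1.
have hsin' : sin (acos (nr a)) = nr b.
  by rewrite hsin -S1 addrC addKr sqrtr_sqr ger0_norm.
pose vd := ph a * (ph b)^*.
have hvd : `|vd| = 1 by rewrite normrM norm_conjC !ph_norm mulr1.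
pose u := fun s : 'I_2 => if s == up then (ph a)^* else
  (if c == 0 then (ph d * vd)^* else - (ph c)^*).
pose v := fun s : 'I_2 => if s == up then 1 else vd.
have hud : (down == up) = false by [].
have huu : (up == up) = true by [].
have hdu : (up == down) = false by [].
have hdd : (down == down) = true by [].
exists (acos (nr a)), u, v; split.
- by apply/andP.
- by move=> s; rewrite /v; case: ifP => _; rewrite ?normr1.
- move=> s; rewrite /u; case: ifP => _; first by rewrite norm_conjC ph_norm.
  case: ifP => _; first by rewrite norm_conjC normrM ph_norm hvd mulr1.
  by rewrite normrN norm_conjC ph_norm.
- by [].
move=> r s; rewrite /Ctheta mxE /u /v.
case: (ord2P r) => ->; case: (ord2P s) => ->; rewrite ?hud ?huu ?hdu ?hdd /=.
- by rewrite mulr1 ph_conjl normE hcos.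
- have -> : (ph a)^* * b * vd = ((ph a)^* * ph a) * ((ph b)^* * b) by rewrite /vd; ring.
  by rewrite ph_conj_ph ph_conjl mul1r normE hsin'.
- case: eqP => [hc|/eqP hc].
    by rewrite -/c hc mulr0 mul0r hsin' -hcb /nr hc normr0 /= oppr0.
  by rewrite -/c mulr1 mulNr ph_conjl normE hcb hsin'.
- case: eqP => [hc|/eqP hc].
    have -> : (ph d * vd)^* * d * vd = ((ph d)^* * d) * (vd^* * vd).
      by rewrite rmorphM /=; ring.
    by rewrite ph_conjl -normCKC hvd expr1n mulr1 normE hda hcos.
  have hcd : c^* * d = - (a^* * b) by apply/eqP; rewrite -addr_eq0 addrC E4.
  have key : (a^* * ph a) * ((ph b)^* * b) = - (c^* * d) * vd by rewrite hcd /vd; ring.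
  have hcn : `|c| != 0 by rewrite normr_eq0.
  rewrite -/d (ph_ne0 hc).
  have -> : - (c^* / `|c|) * d * vd = - (c^* * d) * vd / `|c| by ring.
  rewrite -key ph_conjr ph_conjl.
  by rewrite [`|b|]normE -hcb -normE mulfK // normE hcos.
Qed.

Lemma xi_exists (w : C) : exists xi : R, 0 <= xi <= pi /\
  (`|w| * expi xi = w \/ `|w| * expi xi = w^*).
Proof.
have hpi := @pi_gt0 R.
case: (eqVneq w 0) => [->|hw].
  exists 0; split; first by apply/andP; split; lra.
  by left; rewrite normr0 mul0r.
have hwn : `|w| != 0 by rewrite normr_eq0.
have [pa [pb hpe]] : exists pa pb : R, w / `|w| = (pa +i* pb)%C.
  by exists (complex.Re (w / `|w|)), (complex.Im (w / `|w|)); case: (w / `|w|).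
have hpn : `|(pa +i* pb)%C| = 1.
  by rewrite -hpe normrM normrV ?unitfE // normr_id mulfV.
have hsq : pa ^+ 2 + pb ^+ 2 = 1.
  by apply: complexI; rewrite (add_Re2_Im2 (pa +i* pb)%C) hpn expr1n.
have hr : -1 <= pa <= 1 by apply/andP; split; nra.
exists (acos pa); split; first by apply/andP; split; [exact: acos_ge0|exact: acos_lepi].
have hc : cos (acos pa) = pa by apply: acosK; rewrite in_itv /=.
have hs : sin (acos pa) = `|pb| by rewrite sin_acos // -hsq addrC addKr sqrtr_sqr.
rewrite /expi hc hs.
case: (lerP 0 pb) => hb.
  left; rewrite (ger0_norm hb) -hpe mulrC divfK //.
right; rewrite (ltr0_norm hb).
have -> : (pa +i* - pb)%C = (w / `|w|)^* by rewrite hpe.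
by rewrite rmorphM /= fmorphV /= conj_normC mulrC divfK.
Qed.

Lemma conjR (x : R) : Num.conj (x%:C : C) = x%:C.
Proof. change (conjc x%:C = x%:C); exact: conjc_real. Qed.

Lemma Ctheta_conj th : map_mx Num.conj (Ctheta th) = Ctheta th :> 'M[C]_2.
Proof.
apply/matrixP => r s; rewrite !mxE.
case: ifP => _; first exact: conjR.
case: ifP => _; first exact: conjR.
by rewrite rmorphN /= conjR.
Qed.

End Gauge.

Theorem theorem3 (R : realType) (A : 'M[R[i]]_2) (g : 'cV[R[i]]_2) :
  unitary2 A -> unit_vec g ->
  exists ph x th : R,
    [/\ 0 <= ph <= pi / 2, 0 <= x <= pi, 0 <= th <= pi / 2
      & dist_equiv A g (Ctheta th) (gamma ph x)].
Proof.
move=> hA hg.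
have [th [u [v [hth hv hu hv1 hC]]]] := ctheta_gauge A hA.
pose k := (ph (g up 0))^*.
have hk : `|k| = 1 by rewrite norm_conjC ph_norm.
pose g1 : 'cV[R[i]]_2 := \col_s (k * g s 0 / v s).
have E : dist_equiv A g (Ctheta th) g1.
  by apply: (gauge_equiv A (Ctheta th) g g1 u v k) => // s; rewrite mxE.
move: hg; rewrite /unit_vec sum2 => /nr_sq S.
have h0 := nr_ge0 (g up 0); have h1 := nr_ge0 (g down 0).
have ha1 : 0 <= nr (g up 0) <= 1 by apply/andP; split=> //; nra.
have [p0 p1 hcos hsin] := acos_props ha1.
have hsin' : sin (acos (nr (g up 0))) = nr (g down 0).
  by rewrite hsin -S addrC addKr sqrtr_sqr ger0_norm.
have hw : `|g1 down 0| = `|g down 0|.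
  have hvd0 : v down != 0 by rewrite -normr_eq0 hv oner_eq0.
  by rewrite mxE !(@normrM R[i]) (@normrV R[i]) ?unitfE // hv invr1 mulr1 /k norm_conjC ph_norm mul1r.
have hup : g1 up 0 = (cos (acos (nr (g up 0))))%:C.
  by rewrite mxE hv1 divr1 ph_conjl normE hcos.
have [xi [hxi [H|H]]] := xi_exists (g1 down 0).
- exists (acos (nr (g up 0))), xi, th; split=> //; first by apply/andP.
  have -> : gamma (acos (nr (g up 0))) xi = g1.
    apply/matrixP => s t; rewrite (ord1 t) [LHS]mxE.
    case: (ord2P s) => ->; first by rewrite hup.
    by rewrite /= hsin' -normE -hw H.
  exact: E.
- exists (acos (nr (g up 0))), xi, th; split=> //; first by apply/andP.
  have -> : gamma (acos (nr (g up 0))) xi = map_mx Num.conj g1.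
    apply/matrixP => s t; rewrite (ord1 t) [LHS]mxE [RHS]mxE.
    case: (ord2P s) => ->; first by rewrite hup /= conjR.
    by rewrite /= hsin' -normE -hw H.
  move=> j n; rewrite E (conj_equiv (Ctheta th) g1 j n) Ctheta_conj //.
Qed.
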